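(* Let $A_n(x) = x^n + a_1 x^{n-1} + \dots + a_n$ be a (complex) polynomial whose distinct roots $x_1, \dots, x_m$ have known multiplicities $\alpha_1, \dots, \alpha_m$ (positive integers with $\alpha_1 + \dots + \alpha_m = n$). Given initial approximations $x_1^{[0]}, \dots, x_m^{[0]}$, define iterates for $k = 0,1,2,\dots$ and $i = 1,\dots,m$ by $$x_i^{[k+1]} = x_i^{[k]} - \alpha_i \left[ S_i^{[k]}(x_i^{[k]}) + \sum_{j=1, j\neq i}^{m} \alpha_j \,(x_j^{[k]} - x_i^{[k]})^{-2}\, A_n(x_j^{[k]}) \left[ \frac{S_j^{[k]}(x_j^{[k]})}{\alpha_j}\right]^{\alpha_j - 1} \Big/ Q_j^{[k]}(x_j^{[k]}) \right]^{-1},$$ where for $p = 1,\dots,m$, $$Q_p^{[k]}(x) = \prod_{l=1, l\neq p}^{m} (x - x_l^{[k]})^{\alpha_l}, \qquad S_p^{[k]}(x) = \frac{A_n'(x)}{A_n(x)} - \frac{Q_p^{[k]\prime}(x)}{Q_p^{[k]}(x)}.$$ Let $d = \min_{i\neq j} |x_i - x_j|$, and let $c, q$ be real positive constants such that $q < 1$, $d - 2c > 0$, and $$2c^2 n (d-2c)^{-2}\Big[ c(d-2c)^{-1} + \big(1 + c(d-2c)^{-1}\big)\,[N + MN + M] \Big] < \alpha_i \quad \text{for all } i = 1,\dots,m,$$ where $M = \big(1 + c/(d-2c)\big)^n - 1$ and $N = \big(1 + n\,(c/(d-2c))^2\big)^{n-1} - 1$. Suppose the initial approximations satisfy $|x_i^{[0]}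 - x_i| < cq$ for $i = 1,\dots,m$. Then for every natural number $k$, $$|x_i^{[k]} - x_i| < c\, q^{4^k}, \qquad i = 1,\dots,m.$$
   Context: The iteration is understood in the sense that all quantities appearing in the formula are defined (the relevant denominators are nonzero). $Q_p^{[k]\prime}$ denotes the derivative of $Q_p^{[k]}$ with respect to $x$, and $A_n'$ the derivative of $A_n$. *)

(* Defs.v *)
From mathcomp Require Import all_boot all_order all_algebra.
From mathcomp Require Import reals complex.
Set Implicit Arguments. Unset Strict Implicit. Unset Printing Implicit Defensive.
Import Order.TTheory GRing.Theory Num.Theory.
Local Open Scope ring_scope.

Section Iteration.
Variables (R : realType) (m : nat).
Local Notation C := R[i].

Definition Qpol (alpha : 'I_m -> nat) (x : 'I_m -> C) (p : 'I_m) : {poly C} :=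
  \prod_(l < m | l != p) ('X - (x l)%:P) ^+ alpha l.

Definition Sfun (A : {poly C}) (alpha : 'I_m -> nat) (x : 'I_m -> C)
  (p : 'I_m) (z : C) : C :=
  A^`().[z] / A.[z] - (Qpol alpha x p)^`().[z] / (Qpol alpha x p).[z].

Definition bracket (A : {poly C}) (alpha : 'I_m -> nat) (x : 'I_m -> C)
  (i : 'I_m) : C :=
  Sfun A alpha x i (x i) +
  \sum_(j < m | j != i)
     (alpha j)%:R * (x j - x i) ^- 2 * A.[x j]
       * (Sfun A alpha x j (x j) / (alpha j)%:R) ^+ (alpha j).-1
       / (Qpol alpha x j).[x j].

Definition step (A : {poly C}) (alpha : 'I_m -> nat) (x : 'I_m -> C)
  (i : 'I_m) : C :=
  x i - (alpha i)%:R * (bracket A alpha x i)^-1.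

Definition step_defined (A : {poly C}) (alpha : 'I_m -> nat) (x : 'I_m -> C) : Prop :=
  forall i : 'I_m,
    [/\ A.[x i] != 0, (Qpol alpha x i).[x i] != 0,
        (forall j : 'I_m, j != i -> x j != x i)
      & bracket A alpha x i != 0].

End Iteration.

(* Main.v *)
Require Import Defs.
From mathcomp Require Import all_boot all_order all_algebra.
From mathcomp Require Import reals complex.
From mathcomp Require Import ring lra.
Import Order.TTheory GRing.Theory Num.Theory.
Local Open Scope ring_scope.
Local Open Scope complex_scope.
Set Implicit Arguments. Unset Strict Implicit.

Section NR.
Variable R : realType.
Local Notation C := R[i].
Definition nr (z : C) : R := let: a +i* _ := `|z| in a.
Lemma nrE (z : C) : `|z| = (nr z)%:C.
Proof. reflexivity. Qed.
Lemma nr_ge0 z : 0 <= nr z.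
Proof. by rewrite -ler0c -nrE normr_ge0. Qed.
Lemma nrM a b : nr (a * b) = nr a * nr b.
Proof. by apply: complexI; rewrite rmorphM /= -!nrE normrM. Qed.
Lemma nrD a b : nr (a + b) <= nr a + nr b.
Proof. by rewrite -lecR rmorphD /= -!nrE ler_normD. Qed.
Lemma nrV a : nr (a^-1) = (nr a)^-1.
Proof. by apply: complexI; rewrite fmorphV /= -!nrE normfV. Qed.
Lemma nrX a k : nr (a ^+ k) = nr a ^+ k.
Proof. by apply: complexI; rewrite rmorphXn /= -!nrE normrX. Qed.
Lemma nr_nat k : nr (k%:R) = k%:R.
Proof. by apply: complexI; rewrite rmorph_nat /= -!nrE normr_nat. Qed.
Lemma nrN a : nr (- a) = nr a.
Proof. by apply: complexI; rewrite -!nrE normrN. Qed.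
Lemma nr0 : nr 0 = 0.
Proof. by apply: complexI; rewrite -!nrE normr0. Qed.
Lemma nr1 : nr 1 = 1.
Proof. by apply: complexI; rewrite -!nrE normr1. Qed.
Lemma nr_eq0 a : (nr a == 0) = (a == 0).
Proof. by rewrite -(inj_eq (@complexI _)) -nrE /= normr_eq0. Qed.
Lemma nr_sum (I : Type) (r : seq I) (P : pred I) (F : I -> C) :
  nr (\sum_(i <- r | P i) F i) <= \sum_(i <- r | P i) nr (F i).
Proof.
rewrite -lecR -nrE rmorph_sum /=.
apply: le_trans (ler_norm_sum _ _ _) _; rewrite le_eqVlt; apply/orP; left; apply/eqP; apply: eq_bigr => i _; exact: nrE.
Qed.
Lemma nrB a b : nr a - nr b <= nr (a + b).
Proof. have := nrD (a + b) (- b); rewrite nrN addrK; lra. Qed.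
Lemma nr_distC a b : nr (a - b) = nr (b - a).
Proof. by rewrite -nrN opprB. Qed.
Lemma nrDiv a b : nr (a / b) = nr a / nr b.
Proof. by rewrite nrM nrV. Qed.

Lemma logder (I : Type) (r : seq I) (P : pred I) (a : I -> C) (k : I -> nat) z :
  (forall l, P l -> z != a l) ->
  (\prod_(l <- r | P l) ('X - (a l)%:P) ^+ k l).[z] != 0 /\
  (\prod_(l <- r | P l) ('X - (a l)%:P) ^+ k l)^`().[z] =
    (\sum_(l <- r | P l) (k l)%:R / (z - a l)) *
    (\prod_(l <- r | P l) ('X - (a l)%:P) ^+ k l).[z].
Proof.
move=> Hz.
apply: (big_ind2 (fun p s => p.[z] != 0 /\ p^`().[z] = s * p.[z])).
- by rewrite hornerC oner_eq0 derivC hornerC mul0r.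
- move=> p1 s1 p2 s2 [n1 e1] [n2 e2]; split; first by rewrite hornerM mulf_neq0.
  by rewrite derivM hornerD !hornerM e1 e2; ring.
- move=> l Pl; have zl : z - a l != 0 by rewrite subr_eq0 Hz.
  split; first by rewrite horner_exp hornerXsubC expf_neq0.
  rewrite deriv_exp derivXsubC mul1r hornerMn !horner_exp hornerXsubC.
  case: (k l) => [|kk]; first by rewrite !mulr0n; ring.
  rewrite -pred_Sn -mulr_natl exprS; field; exact: zl.
Qed.

Lemma div_le (p P q Q : R) : 0 <= p -> p <= P -> 0 < Q -> Q <= q -> p / q <= P / Q.
Proof.
move=> p0 pP Q0 Qq; have q0 : 0 < q by apply: lt_le_trans Qq.
rewrite ler_pdivrMr // mulrAC ler_pdivlMr //.
apply: ler_pM => //; lra.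
Qed.

Lemma exp_mono_base (a b : R) k : 0 <= a -> a <= b -> a ^+ k <= b ^+ k.
Proof.
move=> a0 ab; elim: k => [|k IH]; first by rewrite !expr0.
rewrite !exprS; apply: ler_pM => //; exact: exprn_ge0.
Qed.

Lemma exp_mono_exp (a : R) k l : 1 <= a -> (k <= l)%N -> a ^+ k <= a ^+ l.
Proof.
move=> a1 kl; rewrite -(subnKC kl) exprD.
have h0 : 0 <= a ^+ k by apply: exprn_ge0; lra.
have h1 := exprn_ege1 (l - k) a1.
by rewrite -{1}(mulr1 (a ^+ k)); apply: ler_wpM2l.
Qed.

Lemma scale_pow (s a : R) k : 0 <= s -> s <= 1 -> 0 <= a ->
  (1 + s * a) ^+ k - 1 <= s * ((1 + a) ^+ k - 1).
Proof.
move=> s0 s1 a0; elim: k => [|k IH]; first by rewrite !expr0 subrr mulr0.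
have X0 : 0 <= (1 + s * a) ^+ k - 1.
  rewrite subr_ge0; apply: exprn_ege1; nra.
have Y0 : 0 <= (1 + a) ^+ k - 1.
  rewrite subr_ge0; apply: exprn_ege1; nra.
rewrite !exprS.
set X := (1 + s * a) ^+ k in IH X0 *; set Y := (1 + a) ^+ k in IH Y0 *.
have h : (1 + s * a) * (X - 1) <= (1 + s * a) * (s * (Y - 1)) by apply: ler_wpM2l => //; nra.
have h2 : 0 <= s * a * (Y - 1) * (1 - s) by rewrite !mulr_ge0 //; lra.
nra.
Qed.

Lemma close_pow (u : C) (U : R) k : nr u <= U ->
  nr ((1 + u) ^+ k - 1) <= (1 + U) ^+ k - 1.
Proof.
move=> uU; have U0 : 0 <= U by apply: le_trans uU; apply: nr_ge0.
elim: k => [|k IH]; first by rewrite !expr0 !subrr nr0.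
have -> : (1 + u) ^+ k.+1 - 1 = (1 + u) * ((1 + u) ^+ k - 1) + u by rewrite exprS; ring.
apply: le_trans (nrD _ _) _; rewrite nrM.
have h1 : nr (1 + u) <= 1 + U by apply: le_trans (nrD _ _) _; rewrite nr1; lra.
have h2 := nr_ge0 ((1 + u) ^+ k - 1).
have h3 : nr (1 + u) * nr ((1 + u) ^+ k - 1) <= (1 + U) * ((1 + U) ^+ k - 1).
  by apply: ler_pM => //; apply: nr_ge0.
rewrite exprS; lra.
Qed.

Lemma close_mul (a b : C) (Aa Bb : R) : nr (a - 1) <= Aa - 1 -> nr (b - 1) <= Bb - 1 ->
  nr (a * b - 1) <= Aa * Bb - 1.
Proof.
move=> ha hb.
have -> : a * b - 1 = (a - 1) * (b - 1) + ((a - 1) + (b - 1)) by ring.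
apply: le_trans (nrD _ _) _; rewrite nrM.
have h1 := nrD (a - 1) (b - 1).
have h3 : nr (a - 1) * nr (b - 1) <= (Aa - 1) * (Bb - 1).
  by apply: ler_pM => //; apply: nr_ge0.
lra.
Qed.

Lemma close_prod (I : Type) (r : seq I) (P : pred I) (F : I -> C) (G : I -> R) :
  (forall i, P i -> nr (F i - 1) <= G i - 1) ->
  nr (\prod_(i <- r | P i) F i - 1) <= \prod_(i <- r | P i) G i - 1.
Proof.
move=> H; apply: (big_ind2 (fun a B => nr (a - 1) <= B - 1)) => //.
- by rewrite !subrr nr0.
- by move=> a1 B1 a2 B2; apply: close_mul.
Qed.
End NR.
Unset Implicit Arguments. Unset Strict Implicit.
Section Alg.
Variables (R : realType) (m : nat) (A : {poly R[i]}) (xi x : 'I_m -> R[i])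
  (alpha : 'I_m -> nat).
Hypotheses (Hal : forall j, (0 < alpha j)%N)
  (HA : A = \prod_(i < m) ('X - (xi i)%:P) ^+ alpha i)
  (Hdef : step_defined A alpha x).

Lemma Aval z : A.[z] = \prod_(l < m) (z - xi l) ^+ alpha l.
Proof. by rewrite HA horner_prod; apply: eq_bigr => l _; rewrite horner_exp hornerXsubC. Qed.

Lemma Qval j z : (Qpol alpha x j).[z] = \prod_(l < m | l != j) (z - x l) ^+ alpha l.
Proof. by rewrite /Qpol horner_prod; apply: eq_bigr => l _; rewrite horner_exp hornerXsubC. Qed.

Lemma Hxx j l : j != l -> x j - x l != 0.
Proof. by move=> jl; case: (Hdef l) => _ _ /(_ j jl); rewrite subr_eq0. Qed.

Lemma Hxxi j l : x j - xi l != 0.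
Proof.
case: (Hdef j) => + _ _ _; rewrite Aval (bigD1 l) //= mulf_eq0 negb_or => /andP [].
by rewrite expf_eq0 Hal.
Qed.

Definition eps j := x j - xi j.
Definition sig j := \sum_(l < m | l != j)
   (alpha l)%:R * eps l / ((x j - xi l) * (x j - x l)).
Definition Pj j := (1 - eps j * sig j / (alpha j)%:R) ^+ (alpha j).-1 *
   \prod_(l < m | l != j) (1 + eps l / (x j - x l)) ^+ alpha l.
Definition T i := \sum_(j < m | j != i) (alpha j)%:R *
   (eps j ^+ 2 / ((x i - xi j) * (x i - x j) ^+ 2)
    + eps j * (Pj j - 1) / (x i - x j) ^+ 2).

Lemma epsn0 j : eps j != 0.
Proof. exact: Hxxi. Qed.

Lemma alphan0 j : (alpha j)%:R != 0 :> R[i].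
Proof. by rewrite pnatr_eq0 -lt0n Hal. Qed.

Lemma A_logder z : (forall l, z - xi l != 0) ->
  A^`().[z] / A.[z] = \sum_(l < m) (alpha l)%:R / (z - xi l).
Proof.
move=> Hz; have Hz' : forall l, true -> z != xi l by move=> l _; rewrite -subr_eq0.
have [nz e] := @logder _ _ (index_enum _) xpredT xi alpha z Hz'.
by rewrite HA e mulfK.
Qed.

Lemma Q_logder j z : (forall l, l != j -> z - x l != 0) ->
  (Qpol alpha x j)^`().[z] / (Qpol alpha x j).[z] =
  \sum_(l < m | l != j) (alpha l)%:R / (z - x l).
Proof.
move=> Hz; have Hz' : forall l, l != j -> z != x l by move=> l lj; rewrite -subr_eq0 Hz.
have [nz e] := @logder _ _ (index_enum _) (fun l => l != j) x alpha z Hz'.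
by rewrite /Qpol e mulfK.
Qed.

Lemma S_expr j : Sfun A alpha x j (x j) = (alpha j)%:R / eps j - sig j.
Proof.
rewrite /Sfun A_logder; last by move=> l; apply: Hxxi.
rewrite Q_logder; last by move=> l lj; rewrite Hxx // eq_sym.
rewrite (bigD1 j) //= /sig -addrA; congr (_ + _).
rewrite -sumrN -big_split -sumrN; apply: eq_bigr => l lj /=.
have h1 := Hxxi j l; have h2 : x j - x l != 0 by rewrite Hxx // eq_sym.
rewrite /eps; field; by rewrite h1 h2.
Qed.

Lemma W_expr j : A.[x j] * (Sfun A alpha x j (x j) / (alpha j)%:R) ^+ (alpha j).-1
   / (Qpol alpha x j).[x j] = eps j * Pj j.
Proof.
rewrite S_expr Aval Qval (bigD1 j) //= /Pj.
set Pa := \prod_(l < m | l != j) (x j - xi l) ^+ alpha l.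
set Pq := \prod_(l < m | l != j) (x j - x l) ^+ alpha l.
set Pr := \prod_(l < m | l != j) (1 + eps l / (x j - x l)) ^+ alpha l.
have key : Pr * Pq = Pa.
  rewrite /Pr /Pq /Pa -big_split; apply: eq_bigr => l lj /=.
  rewrite -exprMn; congr (_ ^+ _).
  have h2 : x j - x l != 0 by rewrite Hxx // eq_sym.
  rewrite /eps; field; exact: h2.
have Pqn0 : Pq != 0.
  by rewrite /Pq; apply/prodf_neq0 => l lj; rewrite expf_neq0 // Hxx // eq_sym.
have e0 := epsn0 j; have a0 := alphan0 j.
have eS : ((alpha j)%:R / eps j - sig j) / (alpha j)%:R
          = (1 - eps j * sig j / (alpha j)%:R) / eps j.
  by field; rewrite e0 a0.
rewrite eS.
rewrite -key /eps.
move: e0 a0; rewrite /eps.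
case: (alpha j) (Hal j) => // k _ e0 a0 /=.
rewrite expr_div_n exprS.
have ek : (x j - xi j) ^+ k != 0 by rewrite expf_neq0.
field; by rewrite Pqn0 ek.
Qed.

Lemma bracket_expr i : bracket A alpha x i = (alpha i)%:R / eps i + T i.
Proof.
rewrite /bracket S_expr /T /sig -addrA; congr (_ + _).
rewrite -sumrN -big_split; apply: eq_bigr => j ji /=.
have W' := W_expr j; rewrite -!mulrA in W' *; rewrite W'.
have h1 := Hxxi i j; have h2 := Hxx _ _ ji; rewrite eq_sym in ji; have h3 := Hxx _ _ ji.
rewrite /eps; field; by rewrite h1 h2 h3.
Qed.

Lemma step_err i : (step A alpha x i - xi i) * ((alpha i)%:R + eps i * T i)
  = eps i ^+ 2 * T i.
Proof.
have hb := bracket_expr i.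
case: (Hdef i) => _ _ _ bn0.
have -> : T i = bracket A alpha x i - (alpha i)%:R / eps i by rewrite hb addrC addKr.
have e0 := epsn0 i.
rewrite /step; move: e0 bn0; rewrite /eps => e0 bn0.
field; by rewrite e0 bn0.
Qed.

Variables (d c E : R).
Hypotheses (Hsep : forall i j, i != j -> d <= nr (xi i - xi j))
  (Hc : 0 < c) (HD : 0 < d - 2 * c) (HE0 : 0 < E) (HEc : E <= c)
  (Heps : forall j, nr (eps j) < E).

Let n := (\sum_(i < m) alpha i)%N.
Let D2 := d - 2 * c.

Lemma L1 j l : j != l -> D2 <= nr (x j - xi l).
Proof.
move=> jl; have := Hsep _ _ jl; have := Heps j.
have -> : xi j - xi l = (x j - xi l) + - eps j by rewrite /eps; ring.
move=> h1 h2; have := nrD (x j - xi l) (- eps j); rewrite nrN /D2; move=> h3; have h4 := le_trans h2 h3; clear h2 h3; move: h1 h4 HEc Hc; generalize (nr (eps j)) (nr (x j - xi l)); move=> *; lra.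
Qed.

Lemma L2 j l : j != l -> D2 <= nr (x j - x l).
Proof.
move=> jl; have := Hsep _ _ jl; have := Heps j; have := Heps l.
have -> : xi j - xi l = ((x j - x l) + - eps j) + eps l by rewrite /eps; ring.
move=> h0 h1 h2; have := nrD (x j - x l + - eps j) (eps l).
have := nrD (x j - x l) (- eps j); rewrite nrN /D2 => h3 h4.
have h5 := le_trans h2 h4; clear h2 h4; move: h0 h1 h3 h5 HEc Hc.
generalize (nr (eps j)) (nr (eps l)) (nr (x j - x l)) (nr (x j - x l + - eps j)); move=> *; lra.
Qed.

Lemma sum_le j : (\sum_(l < m | l != j) alpha l <= n)%N.
Proof. by rewrite /n [X in (_ <= X)%N](bigD1 j) //= leq_addl. Qed.

Lemma alpha_le j : (alpha j <= n)%N.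
Proof. by rewrite /n (bigD1 j) //= leq_addr. Qed.

Lemma nr_eps_ge0 j : 0 <= nr (eps j).
Proof. exact: nr_ge0. Qed.

Lemma sig_bound j : nr (sig j) <= n%:R * (E / D2 ^+ 2).
Proof.
apply: le_trans (nr_sum _ _ _) _.
apply: (@le_trans _ _ (\sum_(l < m | l != j) (alpha l)%:R * (E / D2 ^+ 2))).
  apply: ler_sum => l lj; rewrite !nrDiv !nrM nr_nat -mulrA expr2.
  apply: ler_wpM2l => //; apply: div_le.
  - exact: nr_ge0.
  - exact: ltW.
  - by rewrite mulr_gt0.
  - rewrite eq_sym in lj; apply: ler_pM => //; try exact: ltW; [exact: L1 | exact: L2].
rewrite -mulr_suml -natr_sum; apply: ler_wpM2r.
  by apply: divr_ge0; [exact: ltW | exact: sqr_ge0].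
by rewrite ler_nat sum_le.
Qed.

Let t := c / D2.
Let s := E / c.
Let Mv := (1 + t) ^+ n - 1.
Let Nv := (1 + n%:R * t ^+ 2) ^+ n.-1 - 1.
Let K := Nv + Mv * Nv + Mv.

Lemma t_ge0 : 0 <= t. Proof. by rewrite /t divr_ge0 // ltW. Qed.
Lemma s_ge0 : 0 <= s. Proof. by rewrite /s divr_ge0 // ltW. Qed.
Lemma s_le1 : s <= 1. Proof. by rewrite /s ler_pdivrMr // mul1r. Qed.
Lemma Mv_ge0 : 0 <= Mv.
Proof. rewrite /Mv subr_ge0 exprn_ege1 //; have := t_ge0; lra. Qed.
Lemma Nv_ge0 : 0 <= Nv.
Proof.
rewrite /Nv subr_ge0 exprn_ege1 //.
have : 0 <= n%:R * t ^+ 2 :> R by rewrite mulr_ge0 // sqr_ge0.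
lra.
Qed.

Lemma part1 j : nr ((1 - eps j * sig j / (alpha j)%:R) ^+ (alpha j).-1 - 1)
  <= (1 + s * (n%:R * t ^+ 2)) ^+ (alpha j).-1 - 1.
Proof.
apply: close_pow.
rewrite nrN nrDiv nrM nr_nat.
have a1 : 1 <= (alpha j)%:R :> R by rewrite ler1n Hal.
have h0 : 0 <= nr (eps j) * nr (sig j) by rewrite mulr_ge0 // nr_ge0.
have h1 : nr (eps j) * nr (sig j) <= E * (n%:R * (E / D2 ^+ 2)).
  by apply: ler_pM; [exact: nr_ge0 | exact: nr_ge0 | exact: ltW (Heps j) | exact: sig_bound].
have h2 : nr (eps j) * nr (sig j) / (alpha j)%:R <= nr (eps j) * nr (sig j).
  rewrite ler_pdivrMr; last lra.
  by rewrite ler_peMr.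
have e : E * (n%:R * (E / D2 ^+ 2)) = s * (s * (n%:R * t ^+ 2)).
  rewrite /s /t; field; apply/andP; split; rewrite ?gt_eqF //.
have h3 : s * (s * (n%:R * t ^+ 2)) <= s * (n%:R * t ^+ 2).
  apply: ler_piMl; last exact: s_le1.
  by rewrite mulr_ge0 ?s_ge0 // mulr_ge0 // sqr_ge0.
lra.
Qed.

Lemma part2 j : nr (\prod_(l < m | l != j) (1 + eps l / (x j - x l)) ^+ alpha l - 1)
  <= (1 + s * t) ^+ n - 1.
Proof.
apply: le_trans (close_prod _ (G := fun l => (1 + s * t) ^+ alpha l) _) _.
  move=> l lj; apply: close_pow; rewrite nrDiv.
  have -> : s * t = E / D2 by rewrite /s /t; field; rewrite ?gt_eqF.
  apply: div_le; [exact: nr_ge0 | exact: ltW (Heps l) | exact: HD | rewrite eq_sym in lj; exact: L2].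
rewrite prodrXr lerD2r; apply: exp_mono_exp; last exact: sum_le.
have := mulr_ge0 s_ge0 t_ge0; lra.
Qed.

Lemma Pj_bound j : nr (Pj j - 1) <= s * K.
Proof.
apply: le_trans (close_mul (part1 j) (part2 j)) _.
set a := s * (n%:R * t ^+ 2).
have a0 : 0 <= a by rewrite /a mulr_ge0 ?s_ge0 // mulr_ge0 // sqr_ge0.
have h1 : (1 + a) ^+ (alpha j).-1 <= 1 + s * Nv.
  apply: (@le_trans _ _ ((1 + a) ^+ n.-1)).
    apply: exp_mono_exp; first lra.
    by rewrite -!subn1 leq_sub2r // alpha_le.
  have := scale_pow (n.-1) s_ge0 s_le1 (mulr_ge0 (ler0n _ n) (sqr_ge0 t)).
  rewrite /Nv /a; lra.
have h2 : (1 + s * t) ^+ n <= 1 + s * Mv.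
  have := scale_pow n s_ge0 s_le1 t_ge0; rewrite /Mv; lra.
have h0a : 0 <= (1 + a) ^+ (alpha j).-1 by apply: exprn_ge0; lra.
have h0b : 0 <= (1 + s * t) ^+ n by apply: exprn_ge0; have := mulr_ge0 s_ge0 t_ge0; lra.
have h3 := ler_pM h0a h0b h1 h2.
have hN := Nv_ge0; have hM := Mv_ge0; have s0 := s_ge0; have s1 := s_le1.
have h4 : s * s * (Mv * Nv) <= s * (Mv * Nv).
  by rewrite -mulrA; apply: ler_piMl => //; rewrite mulr_ge0 // mulr_ge0.
rewrite /K; nra.
Qed.

Let Z := n%:R * c ^+ 2 / D2 ^+ 2 * (t + K).

Lemma K_ge0 : 0 <= K.
Proof. rewrite /K; apply: addr_ge0; [apply: addr_ge0; [exact: Nv_ge0 | exact: mulr_ge0 Mv_ge0 Nv_ge0] | exact: Mv_ge0]. Qed.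

Lemma T_bound i : nr (T i) <= s ^+ 2 / c * Z.
Proof.
set B := E ^+ 2 / (D2 * D2 ^+ 2) + E * (s * K) / D2 ^+ 2.
apply: le_trans (nr_sum _ _ _) _.
apply: (@le_trans _ _ (\sum_(j < m | j != i) (alpha j)%:R * B)).
  apply: ler_sum => j ji; rewrite nrM nr_nat; apply: ler_wpM2l => //.
  apply: le_trans (nrD _ _) _; apply: lerD.
    rewrite nrDiv nrM !nrX; apply: div_le.
    - by rewrite exprn_ge0 // nr_ge0.
    - by apply: exp_mono_base; [exact: nr_ge0 | exact: ltW (Heps j)].
    - by rewrite mulr_gt0 // exprn_gt0.
    - rewrite eq_sym in ji; apply: ler_pM.
      + exact: ltW.
      + by rewrite exprn_ge0 // ltW.
      + exact: L1.
      + by apply: exp_mono_base; [exact: ltW | exact: L2].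
  rewrite nrDiv nrM !nrX; apply: div_le.
  - by rewrite mulr_ge0 // nr_ge0.
  - by apply: ler_pM; [exact: nr_ge0 | exact: nr_ge0 | exact: ltW (Heps j) | exact: Pj_bound].
  - by rewrite exprn_gt0.
  - rewrite eq_sym in ji; by apply: exp_mono_base; [exact: ltW | exact: L2].
rewrite -mulr_suml -natr_sum.
have B0 : 0 <= B.
  have D0 : 0 <= D2 by exact: ltW.
  apply: addr_ge0; apply: divr_ge0.
  - exact: exprn_ge0 (ltW HE0).
  - exact: mulr_ge0 D0 (exprn_ge0 _ D0).
  - exact: mulr_ge0 (ltW HE0) (mulr_ge0 s_ge0 K_ge0).
  - exact: exprn_ge0 _ D0.
apply: (@le_trans _ _ (n%:R * B)).
  by apply: ler_wpM2r => //; rewrite ler_nat sum_le.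
rewrite /B /Z /s /t; rewrite le_eqVlt; apply/orP; left; apply/eqP; field.
by rewrite !gt_eqF.
Qed.

Lemma final i :
  2 * c ^+ 2 * n%:R * (d - 2 * c) ^- 2 *
       (c / (d - 2 * c) + (1 + c / (d - 2 * c)) * (Nv + Mv * Nv + Mv))
     < (alpha i)%:R ->
  nr (step A alpha x i - xi i) < s ^+ 4 * c.
Proof.
move=> Hbig.
have Z0 : 0 <= Z.
  rewrite /Z mulr_ge0 ?divr_ge0 ?mulr_ge0 ?exprn_ge0 ?ler0n //; try exact: ltW.
  by apply: addr_ge0; [exact: t_ge0 | exact: K_ge0].
have h2Z : 2 * Z < (alpha i)%:R.
  apply: le_lt_trans Hbig; rewrite /Z -/D2 -/t -/K.
  have tK : 0 <= t * K by apply: mulr_ge0; [exact: t_ge0 | exact: K_ge0].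
  have P0 : 0 <= 2 * c ^+ 2 * n%:R * D2 ^- 2.
    by rewrite !mulr_ge0 ?ler0n ?exprn_ge0 ?invr_ge0 ?exprn_ge0 //; try exact: ltW.
  have -> : 2 * (n%:R * c ^+ 2 / D2 ^+ 2 * (t + K)) = 2 * c ^+ 2 * n%:R * D2 ^- 2 * (t + K).
    by rewrite /D2; ring.
  apply: ler_wpM2l => //; rewrite mulrDl mul1r; lra.
have e := step_err i.
have e2 := congr1 (@nr R) e; rewrite !nrM -expr2 in e2.
set u := nr (step A alpha x i - xi i) in e2 *.
set D := nr ((alpha i)%:R + eps i * T i) in e2.
have hD : (alpha i)%:R - nr (eps i) * nr (T i) <= D.
  by have := nrB (alpha i)%:R (eps i * T i); rewrite nr_nat nrM.
have hT := T_bound i.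
have hs0 : 0 < s by rewrite /s divr_gt0.
have hs1 := s_le1.
have heT : nr (eps i) * nr (T i) <= Z.
  have hT0 := nr_ge0 (T i).
  apply: (@le_trans _ _ (E * (s ^+ 2 / c * Z))).
    by apply: ler_pM; [exact: nr_ge0 | exact: hT0 | exact: ltW (Heps i) | exact: hT].
  have -> : E * (s ^+ 2 / c * Z) = s ^+ 3 * Z by rewrite /s; field; rewrite gt_eqF.
  apply: ler_piMl => //; rewrite -(expr1n _ 3); apply: exp_mono_base => //; exact: ltW.
have hZD : Z <= D by lra.
have D0 : 0 < D by lra.
set w := s ^+ 2 / c.
have w0 : 0 < w by rewrite /w divr_gt0 // exprn_gt0.
have e0 := nr_ge0 (eps i).
have hu : u * D <= (nr (eps i) ^+ 2 * w) * D.
  rewrite e2 -mulrA; apply: ler_wpM2l; first exact: exprn_ge0.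
  apply: le_trans hT _; apply: ler_wpM2l => //; exact: ltW.
rewrite ler_pM2r // in hu.
apply: le_lt_trans hu _.
have -> : s ^+ 4 * c = (E ^+ 2) * w by rewrite /w /s; field; rewrite gt_eqF.
rewrite ltr_pM2r // ltr_pXn2r //; last by rewrite nnegrE ltW.
Qed.
End Alg.
Theorem mainTheorem1 (R : realType) (m : nat)
  (A : {poly R[i]}) (xi : 'I_m -> R[i]) (alpha : 'I_m -> nat)
  (xs : nat -> 'I_m -> R[i]) (d c q : R) :
  (forall i j : 'I_m, i != j -> xi i != xi j) ->
  (forall i : 'I_m, (0 < alpha i)%N) ->
  A = \prod_(i < m) ('X - (xi i)%:P) ^+ alpha i ->
  let n := (\sum_(i < m) alpha i)%N in
  (exists i0 j0 : 'I_m, i0 != j0 /\ d%:C = `|xi i0 - xi j0|) ->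
  (forall i j : 'I_m, i != j -> d%:C <= `|xi i - xi j|) ->
  0 < c -> 0 < q -> q < 1 -> 0 < d - 2 * c ->
  let M := (1 + c / (d - 2 * c)) ^+ n - 1 in
  let N := (1 + n%:R * (c / (d - 2 * c)) ^+ 2) ^+ n.-1 - 1 in
  (forall i : 'I_m,
     2 * c ^+ 2 * n%:R * (d - 2 * c) ^- 2 *
       (c / (d - 2 * c) + (1 + c / (d - 2 * c)) * (N + M * N + M))
     < (alpha i)%:R) ->
  (forall k : nat, step_defined A alpha (xs k)) ->
  (forall (k : nat) (i : 'I_m), xs k.+1 i = step A alpha (xs k) i) ->
  (forall i : 'I_m, `|xs 0%N i - xi i| < (c * q)%:C) ->
  forall (k : nat) (i : 'I_m), `|xs k i - xi i| < (c * q ^+ (4 ^ k))%:C.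
Proof.
move=> _ Hal HA n _ Hsep Hc Hq0 Hq1 HD M N Hbig Hdef Hstep H0 k.
have Hsep' : forall i j : 'I_m, i != j -> d <= nr (xi i - xi j).
  by move=> i j ij; rewrite -lecR -nrE; apply: Hsep.
suff : forall i, nr (xs k i - xi i) < c * q ^+ (4 ^ k).
  by move=> H i; rewrite nrE ltcR.
elim: k => [|k IH] i.
  by rewrite expn0 expr1 -ltcR -nrE.
set E := c * q ^+ (4 ^ k).
have E0 : 0 < E by rewrite /E mulr_gt0 // exprn_gt0.
have Ec : E <= c.
  rewrite /E ler_piMr //; first exact: ltW.
  by rewrite exprn_ile1 // ltW.
have := @final R m A xi (xs k) alpha Hal HA (Hdef k) d c E Hsep' Hc HD E0 Ec IH i (Hbig i).
rewrite Hstep.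
have -> : (E / c) ^+ 4 * c = c * q ^+ (4 ^ k.+1).
  by rewrite /E expnSr exprM; field; rewrite gt_eqF.
by [].
Qed.
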